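(* If $n$ is a power of $2$ (with exponent at least $1$), then $$\sum_{k=0}^{n-1}(-1)^k(2k+1)^3D_k\equiv 2n^2\pmod{n^3}.$$
   Context: $D_n=\sum_{k=0}^{n}\binom{n}{k}\binom{n+k}{k}$ are the central Delannoy numbers. *)

(* Defs.v *)
From mathcomp Require Import all_boot all_algebra.
Set Implicit Arguments. Unset Strict Implicit. Unset Printing Implicit Defensive.
Import GRing.Theory.

Definition delannoy (n : nat) : nat :=
  \sum_(0 <= k < n.+1) 'C(n, k) * 'C(n + k, k).

(* Main.v *)
Require Import Defs.
From mathcomp Require Import all_boot all_algebra.
From mathcomp Require Import ring zify.
Import GRing.Theory.
Local Open Scope ring_scope.

Lemma binA (k j : nat) :
  ('C(k, j) * 'C(k + j, j) = 'C(k + j, j.*2) * 'C(j.*2, j))%N.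
Proof.
case: (leqP j k) => hjk; last first.
  rewrite (bin_small hjk) mul0n bin_small ?mul0n // -addnn ltn_add2r //.
apply/eqP; rewrite -(eqn_pmul2r (_ : 0 < j`! * j`! * (k-j)`!)%N); last first.
  by rewrite !muln_gt0 !fact_gt0.
have h1 := bin_fact hjk.
have h2 := bin_fact (leq_addl k j); rewrite addnK in h2.
have h3 : (j.*2 <= k + j)%N by rewrite -addnn leq_add2r.
have h4 := bin_fact h3.
have e : (k + j - j.*2 = k - j)%N by rewrite -addnn subnDr.
rewrite e in h4.
have h5 : (j <= j.*2)%N by rewrite -addnn leq_addl.
have h6 := bin_fact h5.
have e2 : (j.*2 - j = j)%N by rewrite -addnn addnK.
rewrite e2 in h6.
apply/eqP; transitivity (k + j)`!%N.
  rewrite (_ : ('C(k, j) * 'C(k + j, j) * (j`! * j`! * (k - j)`!)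
     = ('C(k, j) * (j`! * (k - j)`!)) * ('C(k + j, j) * j`!))%N); last by ring.
  by rewrite h1 -h2; ring.
rewrite (_ : ('C(k + j, j.*2) * 'C(j.*2, j) * (j`! * j`! * (k - j)`!)
     = 'C(k + j, j.*2) * (('C(j.*2, j) * (j`! * j`!)) * (k - j)`!))%N); last by ring.
by rewrite h6.
Qed.
Lemma relT (m j : nat) :
  ((m.+1)%:Z - j%:Z) * ('C(m.+1 + j, j.*2))%:Z = ((m.+1 + j)%N)%:Z * ('C(m + j, j.*2))%:Z.
Proof.
case: (leqP j m.+1) => hj; last first.
  rewrite !bin_small ?mulr0 //; rewrite -addnn; lia.
have H := mul_bin_down (m.+1 + j) j.*2.
rewrite addSn /= in H.
have e : ((m + j).+1 - j.*2 = m.+1 - j)%N by rewrite -addnn; lia.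
rewrite e in H.
have := congr1 (fun x : nat => x%:Z) H => /=; rewrite !PoszM => ->.
by rewrite subzn // addSn.
Qed.

Lemma Tsum (m j : nat) :
  \sum_(k < m.+1) (-1) ^+ k * ((2 * k + 1)%N)%:Z ^+ 3 * ('C(k + j, j.*2))%:Z
  = (-1) ^+ m * ('C(m + j, j.*2))%:Z * ((m + j + 1)%N)%:Z
      * (4 * ((m.+1)%N)%:Z ^+ 2 - 4 * j%:Z - 3).
Proof.
elim: m => [|m IH].
  rewrite big_ord1 /= add0n.
  case: j => [|j]; first by rewrite bin0.
  by rewrite bin_small ?mulr0 ?mul0r //; rewrite -addnn; lia.
rewrite big_ord_recr /= IH.
have R := relT m j.
set c := ('C(m + j, j.*2))%:Z in R *.
set c' := ('C(m.+1 + j, j.*2))%:Z in R *.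
rewrite addSn in c' R *.
rewrite (_ : (m + j + 1)%N = (m.+1 + j)%N); last by rewrite addn1 addSn.
transitivity ((-1) ^+ m * (((m.+1 + j)%N)%:Z * c) * (4 * ((m.+1)%N)%:Z ^+ 2 - 4 * j%:Z - 3)
   + (-1) ^+ m.+1 * ((2 * m.+1 + 1)%N)%:Z ^+ 3 * c'); first by ring.
rewrite -R ![(-1) ^+ m.+1]exprS.
set s := (-1) ^+ m.
ring.
Qed.


Lemma delZ (k M : nat) : (k < M)%N ->
  (delannoy k)%:Z = \sum_(j < M) (('C(k + j, j.*2) * 'C(j.*2, j))%N)%:Z.
Proof.
move=> hk; rewrite /delannoy big_mkord (big_ord_widen M (fun i => 'C(k, i) * 'C(k + i, i))%N hk) big_mkcond.
rewrite -natz natr_sum /=; apply: eq_bigr => j _.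
case: ifP => h; first by rewrite binA natz.
rewrite bin_small ?mul0n //.
move/negbT: h; rewrite -ltnNge ltnS => h; rewrite -addnn; lia.
Qed.

Definition ff (m j : nat) : nat := ('C(m, j) * 'C(m.+1 + j, j))%N.

Lemma gterm (m j : nat) :
  (('C(j.*2, j) * 'C(m + j, j.*2) * (m + j + 1))%N = m.+1 * ff m j)%N.
Proof.
have H : ((m.+1 + j) * 'C(m + j, j) = m.+1 * 'C(m.+1 + j, j))%N.
  by have := mul_bin_down (m.+1 + j) j; rewrite addnK => <-; rewrite addSn.
rewrite /ff.
rewrite (_ : ('C(j.*2, j) * 'C(m + j, j.*2) * (m + j + 1))%N
   = ('C(m + j, j.*2) * 'C(j.*2, j)) * (m.+1 + j))%N; last by rewrite addSn addn1; ring.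
rewrite -binA -mulnA (mulnC 'C(m + j, j)) H; ring.
Qed.

Lemma Sform (m : nat) :
  \sum_(0 <= k < m.+1) (-1) ^+ k * ((2 * k + 1)%N)%:Z ^+ 3 * (delannoy k)%:Z
  = (-1) ^+ m * (m.+1)%:Z *
    \sum_(j < m.+1) (ff m j)%:Z * (4 * (m.+1)%:Z ^+ 2 - 4 * j%:Z - 3).
Proof.
rewrite big_mkord.
rewrite (eq_bigr (fun k : 'I_m.+1 => \sum_(j < m.+1)
   (-1) ^+ k * ((2 * k + 1)%N)%:Z ^+ 3 * (('C(k + j, j.*2) * 'C(j.*2, j))%N)%:Z)); last first.
  by move=> k _; rewrite (@delZ k m.+1 (ltn_ord k)) big_distrr.
rewrite exchange_big big_distrr /=; apply: eq_bigr => j _.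
rewrite (eq_bigr (fun k : 'I_m.+1 => ('C(j.*2, j))%:Z *
   ((-1) ^+ k * ((2 * k + 1)%N)%:Z ^+ 3 * ('C(k + j, j.*2))%:Z))); last first.
  by move=> k _; rewrite PoszM; ring.
rewrite -big_distrr /= Tsum.
have := congr1 (fun x : nat => x%:Z) (gterm m j) => /=.
rewrite !PoszM => G.
transitivity ((-1) ^+ m * ('C(j.*2, j)%:Z * 'C(m + j, j.*2)%:Z * (m + j + 1)%N%:Z) *
   (4 * (m.+1)%:Z ^+ 2 - 4 * j%:Z - 3)); first by ring.
rewrite G; ring.
Qed.
Definition Wn (m r : nat) : int :=
  \sum_(j < m.+1) (-1) ^+ j * ('C(m, j))%:Z * ('C(r + j, j))%:Z.
Definition Yn (m r : nat) : int :=
  \sum_(j < m.+1) (-1) ^+ j * ('C(m, j))%:Z * ('C(r.+1 + j, j.+1))%:Z.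

Lemma Y0 m : Yn m 0 = Wn m 0.
Proof.
by apply: eq_bigr => j _; rewrite add0n add1n !binn.
Qed.

Lemma Ystep m r : Yn m r.+1 = Yn m r + Wn m r.+1.
Proof.
rewrite /Yn /Wn -big_split /=; apply: eq_bigr => j _.
rewrite addSn binS PoszD; ring.
Qed.

Lemma Wstep m r : Wn m.+1 r = Wn m r - Yn m r.
Proof.
rewrite /Wn /Yn big_ord_recl /= bin0 addn0 bin0 mulr1 expr0 mul1r.
rewrite (eq_bigr (fun j : 'I_m.+1 =>
   (-1) ^+ j.+1 * ('C(m, j.+1))%:Z * ('C(r + j.+1, j.+1))%:Z
   - (-1) ^+ j * ('C(m, j))%:Z * ('C(r.+1 + j, j.+1))%:Z)); last first.
  move=> j _; rewrite /bump /= add1n binS PoszD exprS addnS addSn; ring.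
rewrite sumrB addrA; congr (_ - _).
transitivity (\sum_(i < m.+2) (-1) ^+ i * ('C(m, i))%:Z * ('C(r + i, i))%:Z).
  rewrite [in RHS]big_ord_recl /= !bin0 expr0 !mulr1; congr (_ + _).
rewrite big_ord_recr /= (bin_small (ltnSn m)) mulr0 mul0r addr0 //.
Qed.

Lemma Wn_closed m r : Wn m r = (-1) ^+ m * ('C(r, m))%:Z.
Proof.
elim: m r => [|m IH] r.
  by rewrite /Wn big_ord1 /= !bin0.
have HY : forall r, Yn m r = (-1) ^+ m * ('C(r.+1, m.+1))%:Z.
  elim=> [|s IHs]; first by rewrite Y0 IH binS (bin_small (ltn0Sn m)) add0n.
  by rewrite Ystep IHs IH [in RHS]binS PoszD; ring.
rewrite Wstep IH HY binS PoszD exprS; ring.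
Qed.

Lemma Vsum m :
  \sum_(j < m.+1) (-1) ^+ j * (('C(m, j) * 'C(m.+1 + j, j))%N)%:Z
  = (-1) ^+ m * (m.+1)%:Z.
Proof.
have := Wn_closed m m.+1; rewrite binSn /Wn => <-.
by apply: eq_bigr => j _; rewrite PoszM mulrA.
Qed.

Lemma pairN m j : ((j.+1 ^ 2) * (ff m j + ff m j.+1) = (m.+1 ^ 2) * ff m j)%N.
Proof.
rewrite /ff.
case: (leqP j m) => hj; last first.
  by rewrite !(bin_small hj) (bin_small (leqW hj)) !(mul0n, muln0, addn0).
have H1 := mul_bin_left m j.
have H2 := mul_bin_diag (m.+1 + j.+1) j.
rewrite addnS /= in H2.
rewrite !addnS.
have e : (j.+1 ^ 2 * ('C(m, j) * 'C(m.+1 + j, j) + 'C(m, j.+1) * 'C((m.+1 + j).+1, j.+1))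
   = j.+1 ^ 2 * ('C(m, j) * 'C(m.+1 + j, j)) + (j.+1 * 'C(m, j.+1)) * (j.+1 * 'C((m.+1 + j).+1, j.+1)))%N
   by ring.
rewrite e H1 -H2.
move: (subnK hj); set d := (m - j)%N => Hm.
rewrite -Hm; ring.
Qed.

Lemma pairsum (F : nat -> int) h :
  \sum_(j < h.*2) F j = \sum_(i < h) (F (i.*2) + F (i.*2).+1).
Proof.
elim: h => [|h IH]; first by rewrite !big_ord0.
by rewrite doubleS !big_ord_recr /= IH addrA.
Qed.

Theorem mainTheorem4 (a : nat) (n : nat) :
  (1 <= a)%N -> n = (2 ^ a)%N ->
  (\sum_(0 <= k < n) (-1) ^+ k * ((2 * k + 1)%N)%:Z ^+ 3 * (delannoy k)%:Z
     = 2 * (n%:Z) ^+ 2 %[mod (n%:Z) ^+ 3])%Z.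
Proof.
case: a => [//|b] _ ->.
set h := (2 ^ b)%N.
have hpos : (0 < h)%N by rewrite expn_gt0.
set m := (h.*2).-1.
have Em : (m.+1 = h.*2)%N by rewrite prednK // double_gt0.
have En : (2 ^ b.+1 = m.+1)%N by rewrite Em expnS mul2n.
rewrite En Sform.
have hodd : odd m.
  by move: (odd_double h); rewrite -Em /=; case: (odd m).
have s1 : (-1) ^+ m = -1 :> int by rewrite -signr_odd hodd expr1.
rewrite s1.
apply/eqP; rewrite eqz_mod_dvd.
set N := Posz m.+1.
have HV : \sum_(j < m.+1) (-1) ^+ j * (ff m j)%:Z = - N.
  by rewrite (Vsum m) s1 mulN1r.
set P := (\sum_(i < h) ((8 * i + 5) * (ff m (i.*2) + ff m (i.*2).+1)))%N.
have HP : (m.+1 ^ 2 %| P)%N.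
  apply: dvdn_sum => i _; apply: dvdn_mull.
  have E := pairN m (i.*2).
  have : (m.+1 ^ 2 %| (i.*2).+1 ^ 2 * (ff m (i.*2) + ff m (i.*2).+1))%N.
    by rewrite E dvdn_mulr.
  rewrite Gauss_dvdr // -En.
  apply: coprimeXl; apply: coprimeXl; apply: coprimeXr.
  by rewrite coprime2n /= odd_double.
have HPz : P%:Z = \sum_(j < m.+1) (ff m j)%:Z * (4 * j%:Z + 3)
                  + 2 * \sum_(j < m.+1) (-1) ^+ j * (ff m j)%:Z.
  rewrite big_distrr -big_split /= Em (pairsum (fun j => (ff m j)%:Z * (4 * j%:Z + 3) + 2 * ((-1) ^+ j * (ff m j)%:Z)) h) /P -natz natr_sum /=.
  apply: eq_bigr => i _.
  rewrite natz exprS -signr_odd odd_double expr0 -!mul2n.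
  ring.
have Hsum : \sum_(j < m.+1) (ff m j)%:Z * (4 * N ^+ 2 - 4 * j%:Z - 3)
   = 4 * N ^+ 2 * \sum_(j < m.+1) (ff m j)%:Z
     - \sum_(j < m.+1) (ff m j)%:Z * (4 * j%:Z + 3).
  by rewrite big_distrr -sumrB; apply: eq_bigr => j _; ring.
have key : -1 * N * \sum_(j < m.+1) (ff m j)%:Z * (4 * N ^+ 2 - 4 * j%:Z - 3)
    - 2 * N ^+ 2 = N * (P%:Z - 4 * N ^+ 2 * \sum_(j < m.+1) (ff m j)%:Z).
  rewrite Hsum HPz HV; ring.
rewrite key (exprS N 2); apply: dvdz_mul; first exact: dvdzz.
apply: rpredB.
  have -> : N ^+ 2 = ((m.+1 ^ 2)%N)%:Z by rewrite /N; ring.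
  exact: HP.
by apply: dvdz_mulr; apply: dvdz_mull; exact: dvdzz.
Qed.
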